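(* Let $\mathcal{G}$ be a multi-layer graph with $l$ layers, $d,s,k\in\mathbb{N}$ with $k\ge1$, and $\mathcal{R}$ a collection of exactly $k$ subsets of $V(\mathcal{G})$. Let $L\subseteq\{1,\dots,l\}$, let $j\in L$ with $j>\max(\{1,\dots,l\}-L)$, and let $U$ be a potential vertex set for $L-\{j\}$, i.e., $U\subseteq V(\mathcal{G})$ with $C^d_S(\mathcal{G})\subseteq U$ for every $S$ with $|S|=s$ that equals $L-\{j\}$ or is a top-down descendant of $L-\{j\}$. If $|U|<\frac1k|\mathsf{Cov}(\mathcal{R})|+|\Delta(\mathcal{R},C^*(\mathcal{R}))|$, then every such $S$ satisfies $|\mathsf{Cov}((\mathcal{R}-\{C^*(\mathcal{R})\})\cup\{C^d_S(\mathcal{G})\})|<(1+\frac1k)|\mathsf{Cov}(\mathcal{R})|$.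
   Context: A multi-layer graph $\mathcal{G}=(V,E_1,\dots,E_l)$ consists of a finite vertex set $V$ and edge sets $E_i$ of simple undirected graphs $G_i=(V,E_i)$. A graph is $d$-dense if every vertex has degree at least $d$; the $d$-coherent core $C^d_L(\mathcal{G})$ is the unique maximal $S\subseteq V$ such that the induced subgraph $G_i[S]$ is $d$-dense for all $i\in L$. Top-down search tree: $L$ is the parent of $L'$ if $L'=L-\{\ell\}$ for some $\ell\in L$ with $\ell>\max(\{1,\dots,l\}-L)$ ($\max(\emptyset)=-\infty$); top-down descendants are obtained by iterating the child relation. For a collection $\mathcal{R}$ of sets, $\mathsf{Cov}(\mathcal{R})=\bigcup_{R\in\mathcal{R}}R$; for $C'\in\mathcal{R}$, $\Delta(\mathcal{R},C')=C'-\mathsf{Cov}(\mathcal{R}-\{C'\})$; $C^*(\mathcal{R})$ is a fixed element of $\mathcal{R}$ minimizing $|\Delta(\mathcal{R},C')|$. *)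

(* Defs.v *)
From mathcomp Require Import all_boot all_order all_algebra.
Set Implicit Arguments. Unset Strict Implicit. Unset Printing Implicit Defensive.

(* A multi-layer graph with l layers on the finite vertex set V: layer i
   (i : 'I_l, standing for layer i+1 of the paper) is a simple undirected
   graph given by a symmetric irreflexive relation E i. *)
Record mlgraph (V : finType) (l : nat) := MLGraph {
  layer : 'I_l -> rel V;
  layer_sym : forall i, symmetric (layer i);
  layer_irr : forall i, irreflexive (layer i)
}.

Section Defs.
Variables (V : finType) (l : nat) (G : mlgraph V l).

Definition dense_in (i : 'I_l) (d : nat) (S : {set V}) : bool :=
  [forall v in S, d <= #|[set u in S | layer G i v u]|].

Definition coherent (L : {set 'I_l}) (d : nat) (S : {set V}) : bool :=
  [forall i in L, dense_in i d S].

(* the d-coherent core C^d_L(G): the maximal S that is d-dense in all layers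
   of L, realised as the union of all such sets (which is itself such a set). *)
Definition core (d : nat) (L : {set 'I_l}) : {set V} :=
  \bigcup_(S | coherent L d S) S.

Definition td_child (L L' : {set 'I_l}) : bool :=
  [exists ell in L, (L' == L :\ ell) && [forall i in ~: L, i < ell]].

Definition td_desc_or_eq (L S : {set 'I_l}) : bool := connect td_child L S.
End Defs.

Section Cov.
Variable (V : finType).
Definition Cov (R : {set {set V}}) : {set V} := \bigcup_(X in R) X.
Definition Delta (R : {set {set V}}) (C : {set V}) : {set V} :=
  C :\: Cov (R :\ C).
Definition is_Cstar (R : {set {set V}}) (C : {set V}) : Prop :=
  C \in R /\ forall C', C' \in R -> #|Delta R C| <= #|Delta R C'|.
End Cov.

(* Main.v *)
Require Import Defs.
From mathcomp Require Import all_boot all_order all_algebra.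
From mathcomp Require Import lra.
Import Order.TTheory GRing.Theory Num.Theory.
Local Open Scope ring_scope.

Lemma nat_part (V : finType) (R : {set {set V}}) (Cs C U : {set V}) :
  Cs \in R -> C \subset U ->
  (#|Cov ((R :\ Cs) :|: [set C])| + #|Delta R Cs| <= #|Cov R| + #|U|)%N.
Proof.
move=> CsR CU.
set X := Cov (R :\ Cs).
have h1 : (#|Cov ((R :\ Cs) :|: [set C])| <= #|X| + #|U|)%N.
  apply: leq_trans (leq_card_setU X U).
  apply: subset_leq_card; apply/subsetP => x /bigcupP [Y].
  rewrite in_setU in_set1 => /orP [YR xY|/eqP -> xC].
    by rewrite in_setU; apply/orP; left; apply/bigcupP; exists Y.
  by rewrite in_setU (subsetP CU) ?orbT.
have XR : X \subset Cov R.
  apply/subsetP => x /bigcupP [Y YR xY]; apply/bigcupP; exists Y => //.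
  by move: YR; rewrite in_setD1 => /andP [].
have h2 : (#|X| + #|Delta R Cs| <= #|Cov R|)%N.
  rewrite -(cardsID X (Cov R)).
  have -> : Cov R :&: X = X by apply/setIidPr.
  rewrite leq_add2l; apply: subset_leq_card; apply/subsetP => x.
  rewrite /Delta -/X !in_setD => /andP [-> xCs] /=.
  by apply/bigcupP; exists Cs.
move: h1 h2; set a := #|Cov _|; set b := #|X|; set c := #|Delta _ _|.
move=> h1 h2.
by rewrite -(leq_add2r c) in h1; apply: leq_trans h1 _; rewrite addnAC leq_add2r.
Qed.

Theorem lemma6 (V : finType) (l : nat) (G : mlgraph V l) (d s k : nat)
  (R : {set {set V}}) (Cs : {set V}) (L : {set 'I_l}) (j : 'I_l) (U : {set V}) :
  (1 <= k)%N -> #|R| = k -> is_Cstar R Cs ->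
  j \in L -> (forall i : 'I_l, i \notin L -> (i < j)%N) ->
  (forall S : {set 'I_l}, #|S| = s -> td_desc_or_eq (L :\ j) S ->
     core G d S \subset U) ->
  (#|U|%:R : rat) < (#|Cov R|)%:R / k%:R + (#|Delta R Cs|)%:R ->
  forall S : {set 'I_l}, #|S| = s -> td_desc_or_eq (L :\ j) S ->
    (#|Cov ((R :\ Cs) :|: [set core G d S])|%:R : rat)
      < (1 + 1 / k%:R) * (#|Cov R|)%:R.
Proof.
move=> k1 Rk [CsR _] jL hj hU hlt S hS hd.
have := @nat_part V R Cs _ U CsR (hU S hS hd).
rewrite -(ler_nat rat) !natrD => h.
rewrite mulrDl mul1r.
set a := (#|Cov _|%:R : rat) in h *.
set c := (#|Delta _ _|%:R : rat) in h hlt.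
set u := (#|U|%:R : rat) in h hlt.
set r := (#|Cov R|%:R : rat) in h hlt *.
have -> : 1 / k%:R * r = r / k%:R by rewrite mul1r mulrC.
set q := r / k%:R in hlt *.
lra.
Qed.
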